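(* Let $m\in\mathbb{N}=\{0,1,2,\dots\}$ and $a>-1$. Then $$\int_{0}^{\infty}\frac{dx}{(x^{4}+2ax^{2}+1)^{m+1}}=\frac{\pi}{2}\,\frac{P_{m}(a)}{[2(a+1)]^{m+1/2}},\qquad P_m(a)=\sum_{l=0}^{m}d_{l,m}a^{l},$$ where $$d_{l,m}=2^{-2m}\sum_{k=l}^{m}2^{k}\binom{2m-2k}{m-k}\binom{m+k}{m}\binom{k}{l},\qquad 0\le l\le m .$$ In particular each $d_{l,m}$ is a positive rational number, and for $m\ge 1$ one has $2^{2m-1}d_{l,m}\in\mathbb{Z}$. *)

(* Defs.v *)
From Stdlib Require Import Reals QArith Qreals ZArith.
Open Scope R_scope.

Definition improper_integral_0_infty (f : R -> R) (L : R) : Prop :=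
  exists pr : forall b : R, Riemann_integrable f 0 b,
    forall eps : R, eps > 0 ->
      exists M : R, forall b : R, b >= M -> Rabs (RiemannInt (pr b) - L) < eps.

Definition d_coef (l m : nat) : R :=
  / 2 ^ (2 * m) *
  sum_f l m (fun k => 2 ^ k * Binomial.C (2 * m - 2 * k) (m - k)
                       * Binomial.C (m + k) m * Binomial.C k l).

Definition P_poly (m : nat) (a : R) : R :=
  sum_f_R0 (fun l => d_coef l m * a ^ l) m.

(* Main.v *)
Require Import Defs.
From Stdlib Require Import Reals QArith Qreals ZArith Lra Lia.
From Coquelicot Require Import Coquelicot.
Open Scope R_scope.


Fixpoint binom (n k : nat) : nat :=
  match n, k with
  | _, O => 1%nat
  | O, S _ => 0%nat
  | S n', S k' => (binom n' k' + binom n' (S k'))%nat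
  end.

Lemma binom_gt n k : (n < k)%nat -> binom n k = 0%nat.
Proof.
  revert k; induction n as [|n IH]; intros [|k] H; simpl; try lia; auto.
  rewrite !IH; lia.
Qed.

Lemma binom_C n k : (k <= n)%nat -> INR (binom n k) = Binomial.C n k.
Proof.
  revert k; induction n as [|n IH]; intros [|k] H.
  - simpl; rewrite C_n_0; reflexivity.
  - lia.
  - simpl; rewrite C_n_0; reflexivity.
  - simpl. rewrite plus_INR.
    destruct (Nat.eq_dec k n) as [->|Hne].
    + rewrite (binom_gt n (S n)) by lia. rewrite IH by lia. simpl.
      rewrite !C_n_n; lra.
    + rewrite !IH by lia. apply pascal; lia.
Qed.

Definition Ev (m : nat) (u : R) : R :=
  sum_f_R0 (fun j => INR (binom (m + j) (2 * j + 1)) * u ^ (2 * j + 1)) m.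
Definition Od (m : nat) (u : R) : R :=
  sum_f_R0 (fun j => INR (binom (m + j) (2 * j)) * u ^ (2 * j)) m.

Lemma Ev_S m u : Ev (S m) u = u * Od m u + Ev m u.
Proof.
  unfold Ev, Od. rewrite tech5.
  rewrite (binom_gt (S m + S m)) by lia. rewrite Rmult_0_l, Rplus_0_r.
  rewrite scal_sum, <- plus_sum. apply sum_eq. intros j Hj.
  replace (S m + j)%nat with (S (m + j)) by lia.
  replace (2 * j + 1)%nat with (S (2 * j)) by lia. simpl binom.
  rewrite plus_INR. simpl pow. ring.
Qed.

Lemma binom_n0 k : binom k 0 = 1%nat.
Proof. destruct k; reflexivity. Qed.

Lemma Od_S m u : Od (S m) u = u * Ev (S m) u + Od m u.
Proof.
  assert (A1 : Od (S m) u = 1 + sum_f_R0 (fun i => INR (binom (S m + S i) (2 * S i)) * u ^ (2 * S i)) m).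
  { unfold Od. rewrite (decomp_sum _ (S m)) by lia. simpl pred.
    rewrite Nat.mul_0_r, binom_n0. simpl. ring. }
  assert (A2 : Od m u = 1 + sum_f_R0 (fun i => INR (binom (m + S i) (2 * S i)) * u ^ (2 * S i)) m).
  { unfold Od. 
    assert (E1: sum_f_R0 (fun j => INR (binom (m + j) (2 * j)) * u ^ (2 * j)) m =
          sum_f_R0 (fun j => INR (binom (m + j) (2 * j)) * u ^ (2 * j)) (S m)).
    { rewrite tech5. rewrite (binom_gt (m + S m)) by lia. simpl INR. ring. }
    rewrite E1. rewrite (decomp_sum _ (S m)) by lia. simpl pred.
    rewrite Nat.mul_0_r, binom_n0. simpl. ring. }
  assert (A3 : Ev (S m) u = sum_f_R0 (fun i => INR (binom (S m + i) (2 * i + 1)) * u ^ (2 * i + 1)) m).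
  { unfold Ev. rewrite tech5. rewrite (binom_gt (S m + S m)) by lia. simpl INR. ring. }
  rewrite A1, A2, A3. rewrite scal_sum.
  assert (sum_f_R0 (fun i : nat => INR (binom (S m + S i) (2 * S i)) * u ^ (2 * S i)) m =
   sum_f_R0 (fun i : nat => INR (binom (S m + i) (2 * i + 1)) * u ^ (2 * i + 1) * u) m +
   sum_f_R0 (fun i : nat => INR (binom (m + S i) (2 * S i)) * u ^ (2 * S i)) m).
  { rewrite <- plus_sum. apply sum_eq. intros j Hj.
    replace (S m + S j)%nat with (S (S m + j)) by lia.
    replace (2 * S j)%nat with (S (2 * j + 1)) by lia.
    replace (m + S j)%nat with (S m + j)%nat by lia.
    simpl binom. rewrite plus_INR. rewrite <- tech_pow_Rmult. ring. }
  rewrite H. ring.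
Qed.

Lemma alg_aux (x y X Y : R) : x * y = -1 ->
  (x + y) * (x * X - y * Y) + (X - Y) = x * (x * X) - y * (y * Y).
Proof.
  intro H. apply Rminus_diag_uniq.
  replace ((x + y) * (x * X - y * Y) + (X - Y) - (x * (x * X) - y * (y * Y)))
    with ((x * y + 1) * (X - Y)) by ring. rewrite H. ring.
Qed.

Lemma key_EO (x y : R) (m : nat) : x * y = -1 ->
  (x - y) * Ev m (x + y) = x ^ (2 * m) - y ^ (2 * m) /\
  (x - y) * Od m (x + y) = x ^ (2 * m + 1) - y ^ (2 * m + 1).
Proof.
  intro Hxy. induction m as [|m [IH1 IH2]].
  - unfold Ev, Od; simpl. split; ring.
  - assert (HE : (x - y) * Ev (S m) (x + y) = x ^ (2 * S m) - y ^ (2 * S m)).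
    { rewrite Ev_S.
      replace ((x - y) * ((x + y) * Od m (x + y) + Ev m (x + y))) with
        ((x + y) * ((x - y) * Od m (x + y)) + (x - y) * Ev m (x + y)) by ring.
      rewrite IH1, IH2.
      replace (2 * S m)%nat with (S (S (2 * m))) by lia.
      replace (2 * m + 1)%nat with (S (2 * m)) by lia.
      rewrite <- !tech_pow_Rmult. apply alg_aux; exact Hxy. }
    split; [exact HE|].
    rewrite Od_S.
    replace ((x - y) * ((x + y) * Ev (S m) (x + y) + Od m (x + y))) with
        ((x + y) * ((x - y) * Ev (S m) (x + y)) + (x - y) * Od m (x + y)) by ring.
    rewrite HE, IH2.
    replace (2 * S m + 1)%nat with (S (S (2 * m + 1))) by lia.
    replace (2 * S m)%nat with (S (2 * m + 1)) by lia.
    rewrite <- !tech_pow_Rmult. apply alg_aux; exact Hxy.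
Qed.

Lemma key_Od (x : R) (m : nat) : x <> 0 ->
  (x + / x) * Od m (x - / x) = x ^ (2 * m + 1) + (/ x) ^ (2 * m + 1).
Proof.
  intro Hx. destruct (key_EO x (- / x) m) as [_ H].
  { field. exact Hx. }
  replace (x - / x) with (x + - / x) by ring.
  replace (x + / x) with (x - - / x) by ring. rewrite H.
  replace (- / x) with ((-1) * / x) by ring. rewrite Rpow_mult_distr.
  replace (2 * m + 1)%nat with (S (2 * m)) by lia. rewrite pow_1_odd. ring.
Qed.
Lemma cont_der (f : R -> R) x : ex_derive f x -> continuous f x.
Proof. intro H. apply (ex_derive_continuous (K:=R_AbsRing) (V:=R_NormedModule)). exact H. Qed.
Lemma exR_der (f : R -> R) a b : (forall x, ex_derive f x) -> ex_RInt f a b.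
Proof.
  intro H. apply (@ex_RInt_continuous R_CompleteNormedModule). intros z _. apply cont_der. apply H.
Qed.

Lemma exR_sc (j n : nat) (a b : R) : ex_RInt (fun t => sin t ^ j * cos t ^ n) a b.
Proof. apply exR_der. intro x. auto_derive. auto. Qed.

Lemma der_sc (p q : nat) (x : R) : is_derive (fun t => sin t ^ S p * cos t ^ S q) x
  (INR (S p) * (sin x ^ p * cos x ^ S (S q)) - INR (S q) * (sin x ^ S (S p) * cos x ^ q)).
Proof.
  auto_derive; auto. rewrite <- !tech_pow_Rmult. simpl Init.Nat.pred.
  replace (match p with 0%nat => 1 | S _ => INR p + 1 end) with (INR (S p)) by reflexivity.
  replace (match q with 0%nat => 1 | S _ => INR q + 1 end) with (INR (S q)) by reflexivity. ring.
Qed.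

Lemma plusR (x y : R) : plus x y = x + y.
Proof. reflexivity. Qed.

Lemma minusR (x y : R) : minus x y = x - y.
Proof. reflexivity. Qed.
Lemma scalR (x y : R) : scal x y = x * y.
Proof. reflexivity. Qed.

Definition W (j n : nat) : R := RInt (fun t => sin t ^ (2 * j) * cos t ^ (2 * n)) 0 (PI / 2).

Lemma W_split j n : W j n = W (S j) n + W j (S n).
Proof.
  unfold W. rewrite <- (RInt_plus (V:=R_CompleteNormedModule)) by apply exR_sc.
  apply RInt_ext. intros t _. rewrite plusR.
  replace (2 * S j)%nat with (2 * j + 2)%nat by lia.
  replace (2 * S n)%nat with (2 * n + 2)%nat by lia.
  rewrite !pow_add. 
  replace (sin t ^ (2 * j) * sin t ^ 2 * cos t ^ (2 * n) +
    sin t ^ (2 * j) * (cos t ^ (2 * n) * cos t ^ 2)) with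
    (sin t ^ (2 * j) * cos t ^ (2 * n) * (sin t ^ 2 + cos t ^ 2)) by ring.
  rewrite <- !Rsqr_pow2, sin2_cos2. rewrite Rmult_1_r; reflexivity.
Qed.

Lemma W_parts j n : INR (2 * j + 1) * W j (S n) = INR (2 * n + 1) * W (S j) n.
Proof.
  set (f := fun t => sin t ^ (S (2 * j)) * cos t ^ (S (2 * n))).
  set (df := fun t => INR (2 * j + 1) * (sin t ^ (2 * j) * cos t ^ (2 * S n)) -
                      INR (2 * n + 1) * (sin t ^ (2 * S j) * cos t ^ (2 * n))).
  assert (H : is_RInt df 0 (PI/2) (f (PI/2) - f 0)).
  { apply (is_RInt_derive (V:=R_CompleteNormedModule) f df).
    - intros x _. unfold f, df.
      replace (2 * S n)%nat with (S (S (2 * n))) by lia.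
      replace (2 * S j)%nat with (S (S (2 * j))) by lia.
      replace (2 * j + 1)%nat with (S (2 * j)) by lia.
      replace (2 * n + 1)%nat with (S (2 * n)) by lia.
      apply der_sc.
    - intros x _. unfold df. apply cont_der. auto_derive. auto. }
  apply (is_RInt_unique (V:=R_CompleteNormedModule)) in H.
  assert (Hf : f (PI/2) - f 0 = 0).
  { unfold f. rewrite cos_PI2, sin_0. simpl. ring. }
  rewrite Hf in H. unfold df in H.
  rewrite (RInt_minus (V:=R_CompleteNormedModule)
     (fun t => INR (2 * j + 1) * (sin t ^ (2 * j) * cos t ^ (2 * S n)))
     (fun t => INR (2 * n + 1) * (sin t ^ (2 * S j) * cos t ^ (2 * n)))) in H.
  2,3: apply (ex_RInt_scal (V:=R_NormedModule)); apply exR_sc.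
  rewrite (RInt_scal (V:=R_CompleteNormedModule) (fun t => (sin t ^ (2 * j) * cos t ^ (2 * S n)))) in H by apply exR_sc.
  rewrite (RInt_scal (V:=R_CompleteNormedModule) (fun t => (sin t ^ (2 * S j) * cos t ^ (2 * n)))) in H by apply exR_sc.
  unfold W. rewrite minusR, !scalR in H. change (scal (INR (2 * n + 1)) ?b) with (INR (2 * n + 1) * b) in H. lra.
Qed.

Lemma W00 : W 0 0 = PI / 2.
Proof.
  unfold W. rewrite (RInt_ext _ (fun _ => 1)).
  - rewrite (RInt_const (V:=R_CompleteNormedModule)). rewrite scalR. ring.
  - intros; simpl; ring.
Qed.

Lemma W_Sj j n : W (S j) n = INR (2 * j + 1) / INR (2 * j + 2 * n + 2) * W j n.
Proof.
  pose proof (W_split j n) as H1. pose proof (W_parts j n) as H2.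
  assert (Hp : INR (2 * j + 2 * n + 2) = INR (2 * j + 1) + INR (2 * n + 1))
    by (rewrite <- plus_INR; f_equal; lia).
  assert (0 < INR (2 * j + 2 * n + 2)) by (apply lt_0_INR; lia).
  rewrite Hp in *. field_simplify_eq; [|lra].
  rewrite H1. ring_simplify. rewrite H2. ring.
Qed.

Lemma W_Sn j n : W j (S n) = INR (2 * n + 1) / INR (2 * j + 2 * n + 2) * W j n.
Proof.
  pose proof (W_split j n) as H1. pose proof (W_parts j n) as H2.
  assert (Hp : INR (2 * j + 2 * n + 2) = INR (2 * j + 1) + INR (2 * n + 1))
    by (rewrite <- plus_INR; f_equal; lia).
  assert (0 < INR (2 * j + 2 * n + 2)) by (apply lt_0_INR; lia).
  rewrite Hp in *. field_simplify_eq; [|lra].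
  rewrite H1. ring_simplify. rewrite <- H2. ring.
Qed.

Definition Wc (j n : nat) : R :=
  PI / 2 * INR (Factorial.fact (2 * j)) * INR (Factorial.fact (2 * n)) /
  (4 ^ (j + n) * INR (Factorial.fact j) * INR (Factorial.fact n) * INR (Factorial.fact (j + n))).

Lemma W_closed j n : W j n = Wc j n.
Proof.
  assert (H0 : forall n, W 0 n = Wc 0 n).
  { induction n0 as [|n0 IH].
    - rewrite W00. unfold Wc. simpl. field.
    - rewrite W_Sn, IH. unfold Wc.
      replace (2 * S n0)%nat with (S (S (2 * n0))) by lia.
      simpl (0 + S n0)%nat. simpl (0 + n0)%nat.
      rewrite !fact_simpl. rewrite !mult_INR. rewrite !S_INR.
      replace (2 * 0 + 2 * n0 + 2)%nat with (S (S (2 * n0))) by lia.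
      replace (2 * n0 + 1)%nat with (S (2 * n0)) by lia.
      rewrite !S_INR, !mult_INR. simpl pow. simpl (INR 2).
      pose proof (INR_fact_neq_0 n0). pose proof (INR_fact_neq_0 (2 * n0)).
      pose proof (pos_INR n0).
      simpl (Factorial.fact (2 * 0)). simpl (Factorial.fact 0). simpl (INR 1).
      field. repeat split; try lra. apply pow_nonzero; lra. }
  revert n. induction j as [|j IH]; intro n.
  - apply H0.
  - rewrite W_Sj, IH. unfold Wc.
    replace (2 * S j)%nat with (S (S (2 * j))) by lia.
    replace (S j + n)%nat with (S (j + n)) by lia.
    rewrite !fact_simpl. rewrite !mult_INR.
    replace (2 * j + 2 * n + 2)%nat with (S (S (2 * (j + n)))) by lia.
    replace (2 * j + 1)%nat with (S (2 * j)) by lia.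
    rewrite !S_INR, !mult_INR. simpl pow. simpl (INR 2).
    pose proof (INR_fact_neq_0 j). pose proof (INR_fact_neq_0 n).
    pose proof (INR_fact_neq_0 (2 * j)). pose proof (INR_fact_neq_0 (j + n)).
    pose proof (pos_INR j). pose proof (pos_INR (j + n)).
    field. repeat split; try lra. apply pow_nonzero; lra.
Qed.

Lemma sum_f_S (l n : nat) (h : nat -> R) : (l <= n)%nat ->
  sum_f l (S n) h = sum_f l n h + h (S n).
Proof.
  intro H. unfold sum_f. replace (S n - l)%nat with (S (n - l)) by lia.
  rewrite tech5. f_equal. f_equal. lia.
Qed.

Lemma sum_f_nn (n : nat) (h : nat -> R) : sum_f n n h = h n.
Proof. unfold sum_f. rewrite Nat.sub_diag. simpl. reflexivity. Qed.

Lemma exchange (c : nat -> R) (a : R) (n : nat) :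
  sum_f_R0 (fun l => sum_f l n (fun k => c k * Binomial.C k l) * a ^ l) n =
  sum_f_R0 (fun k => c k * (a + 1) ^ k) n.
Proof.
  induction n as [|n IH].
  - simpl. rewrite sum_f_nn. unfold Binomial.C. simpl. field.
  - rewrite tech5. rewrite sum_f_nn.
    rewrite (sum_eq _ (fun l => sum_f l n (fun k => c k * Binomial.C k l) * a ^ l +
                               c (S n) * (Binomial.C (S n) l * a ^ l))).
    2: { intros i Hi. rewrite sum_f_S by lia. ring. }
    rewrite plus_sum. rewrite IH. rewrite tech5. rewrite (sum_eq (fun i => c (S n) * (Binomial.C (S n) i * a ^ i)) (fun i => Binomial.C (S n) i * a ^ i * c (S n))) by (intros; ring). rewrite <- scal_sum.
    rewrite binomial.
    rewrite (sum_eq (fun i => Binomial.C (S n) i * a ^ i * 1 ^ (S n - i))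
                    (fun i => Binomial.C (S n) i * a ^ i)).
    2: { intros i _. rewrite pow1. ring. }
    rewrite tech5. ring.
Qed.

Lemma P_poly_eq (m : nat) (a : R) :
  P_poly m a = / 2 ^ (2 * m) *
    sum_f_R0 (fun k => 2 ^ k * Binomial.C (2 * m - 2 * k) (m - k) * Binomial.C (m + k) m
                       * (a + 1) ^ k) m.
Proof.
  unfold P_poly, d_coef.
  rewrite (sum_eq _ (fun l => (sum_f l m (fun k => (2 ^ k * Binomial.C (2 * m - 2 * k) (m - k)
                       * Binomial.C (m + k) m) * Binomial.C k l) * a ^ l) * / 2 ^ (2 * m))).
  2: { intros; ring. }
  rewrite <- scal_sum. f_equal. apply exchange.
Qed.

Lemma C_pos n k : 0 < Binomial.C n k.
Proof.
  unfold Binomial.C. apply Rdiv_lt_0_compat.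
  - apply lt_0_INR, lt_O_fact.
  - apply Rmult_lt_0_compat; apply lt_0_INR, lt_O_fact.
Qed.

Lemma sum_R0_pos (h : nat -> R) n : (forall i, 0 < h i) -> 0 < sum_f_R0 h n.
Proof.
  intro H. induction n as [|n IH]; simpl; [apply H|]. specialize (H (S n)). lra.
Qed.

Lemma d_pos l m : 0 < d_coef l m.
Proof.
  unfold d_coef, sum_f. apply Rmult_lt_0_compat.
  - apply Rinv_0_lt_compat, pow_lt; lra.
  - apply sum_R0_pos. intro i. apply Rmult_lt_0_compat; [apply Rmult_lt_0_compat; [apply Rmult_lt_0_compat|]|]; try apply C_pos.
    apply pow_lt; lra.
Qed.

Definition isQ (x : R) : Prop := exists q : Q, Q2R q = x.

Lemma isQ_INR n : isQ (INR n).
Proof.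
  exists (inject_Z (Z.of_nat n)). unfold Q2R. simpl. rewrite INR_IZR_INZ. field.
Qed.
Lemma isQ_plus x y : isQ x -> isQ y -> isQ (x + y).
Proof. intros [p Hp] [q Hq]. exists (p + q)%Q. rewrite Q2R_plus; subst; reflexivity. Qed.
Lemma isQ_mult x y : isQ x -> isQ y -> isQ (x * y).
Proof. intros [p Hp] [q Hq]. exists (p * q)%Q. rewrite Q2R_mult; subst; reflexivity. Qed.
Lemma isQ_inv x : x <> 0 -> isQ x -> isQ (/ x).
Proof.
  intros Hx [p Hp]. exists (/ p)%Q. rewrite Q2R_inv; [subst; reflexivity|].
  intro E. apply Hx. rewrite <- Hp. apply Qeq_eqR in E. rewrite E. unfold Q2R; simpl. ring.
Qed.
Lemma isQ_pow x n : isQ x -> isQ (x ^ n).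
Proof.
  intro H. induction n; simpl. - apply (isQ_INR 1). - apply isQ_mult; auto.
Qed.
Lemma isQ_C n k : isQ (Binomial.C n k).
Proof.
  unfold Binomial.C, Rdiv. apply isQ_mult; [apply isQ_INR|]. apply isQ_inv.
  - apply Rmult_integral_contrapositive; split; apply INR_fact_neq_0.
  - apply isQ_mult; apply isQ_INR.
Qed.
Lemma isQ_sum (h : nat -> R) n : (forall i, isQ (h i)) -> isQ (sum_f_R0 h n).
Proof. intro H. induction n; simpl; auto. apply isQ_plus; auto. Qed.

Lemma d_Q l m : isQ (d_coef l m).
Proof.
  unfold d_coef, sum_f. apply isQ_mult.
  - apply isQ_inv. apply pow_nonzero; lra. apply isQ_pow. apply (isQ_INR 2).
  - apply isQ_sum. intro i. apply isQ_mult; [apply isQ_mult; [apply isQ_mult|]|]; try apply isQ_C.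
    apply isQ_pow, (isQ_INR 2).
Qed.

Definition isEv (x : R) : Prop := exists n : nat, x = 2 * INR n.

Lemma isEv_plus x y : isEv x -> isEv y -> isEv (x + y).
Proof. intros [p Hp] [q Hq]. exists (p + q)%nat. rewrite plus_INR; subst; ring. Qed.

Lemma binom_mid m : INR (binom (2 * S m) (S m)) = 2 * INR (binom (S (2 * m)) m).
Proof.
  rewrite !binom_C by lia. replace (2 * S m)%nat with (S (S (2 * m))) by lia.
  rewrite <- pascal by lia. rewrite (pascal_step1 (S (2 * m)) (S m)) by lia.
  replace (S (2 * m) - S m)%nat with m by lia. ring.
Qed.

Lemma term_ev (m l k : nat) : (1 <= m)%nat -> (l <= k <= m)%nat ->
  isEv (2 ^ k * Binomial.C (2 * m - 2 * k) (m - k) * Binomial.C (m + k) m * Binomial.C k l).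
Proof.
  intros Hm [Hlk Hkm].
  rewrite <- (binom_C (2 * m - 2 * k)) by lia. rewrite <- (binom_C (m + k)) by lia.
  rewrite <- (binom_C k) by lia.
  destruct k as [|k].
  - assert (l = 0%nat) by lia. subst l. simpl pow.
    rewrite ?Nat.sub_0_r, ?Nat.add_0_r, ?Nat.mul_0_r, ?Nat.sub_0_r.
    destruct m as [|m]; [lia|]. rewrite binom_mid.
    exists (binom (S (2 * m)) m * binom (S m) (S m) * binom 0 0)%nat.
    rewrite !mult_INR. ring.
  - exists (2 ^ k * binom (2 * m - 2 * S k) (m - S k) * binom (m + S k) m * binom (S k) l)%nat.
    rewrite !mult_INR, pow_INR. replace (INR 2) with 2 by (simpl; ring). simpl pow. ring.
Qed.

Lemma d_Z l m : (1 <= m)%nat -> (l <= m)%nat ->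
  exists z : Z, 2 ^ (2 * m - 1) * d_coef l m = IZR z.
Proof.
  intros Hm Hl.
  assert (HE : isEv (sum_f l m (fun k => 2 ^ k * Binomial.C (2 * m - 2 * k) (m - k)
                       * Binomial.C (m + k) m * Binomial.C k l))).
  { unfold sum_f.
    assert (forall N, (N <= m - l)%nat -> isEv (sum_f_R0 (fun x => 2 ^ (x + l) *
         Binomial.C (2 * m - 2 * (x + l)) (m - (x + l)) * Binomial.C (m + (x + l)) m *
         Binomial.C (x + l) l) N)).
    { induction N as [|N IH]; intro HN; cbn [sum_f_R0].
      - apply term_ev; lia.
      - apply isEv_plus. apply IH; lia. apply term_ev; lia. }
    apply H. lia. }
  destruct HE as [N HN]. exists (Z.of_nat N). unfold d_coef. rewrite HN.
  rewrite <- INR_IZR_INZ.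
  replace (2 * m)%nat with (S (2 * m - 1)) at 2 by lia. simpl pow.
  field. apply pow_nonzero; lra.
Qed.

Lemma exder_sum (g : nat -> R -> R) (n : nat) (t : R) :
  (forall j x, ex_derive (g j) x) -> ex_derive (fun x => sum_f_R0 (fun j => g j x) n) t.
Proof.
  intro H. induction n as [|n IH]; simpl.
  - apply H.
  - apply (ex_derive_plus (K:=R_AbsRing) (V:=R_NormedModule)); auto.
Qed.

Lemma RInt_sum (g : nat -> R -> R) (n : nat) (a b : R) :
  (forall j x, ex_derive (g j) x) ->
  RInt (fun x => sum_f_R0 (fun j => g j x) n) a b = sum_f_R0 (fun j => RInt (g j) a b) n.
Proof.
  intro H. induction n as [|n IH]; simpl.
  - reflexivity.
  - rewrite (RInt_plus (V:=R_CompleteNormedModule) (fun x => sum_f_R0 (fun j => g j x) n) (g (S n))).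
    + rewrite IH. reflexivity.
    + apply exR_der. intro x. apply exder_sum; auto.
    + apply exR_der. auto.
Qed.

Definition Kc (m : nat) (s : R) (j : nat) : R :=
  INR (binom (m + j) (2 * j)) * s ^ j / (s ^ m * sqrt s).

Definition w (m : nat) (s : R) (t : R) : R :=
  sum_f_R0 (fun j => Kc m s j * (sin t ^ (2 * j) * cos t ^ (2 * (m - j)))) m.

Lemma w_exder m s t : ex_derive (w m s) t.
Proof.
  unfold w. apply (exder_sum (fun j t => Kc m s j * (sin t ^ (2 * j) * cos t ^ (2 * (m - j))))).
  intros j x. auto_derive. auto.
Qed.

Lemma RInt_w m s : RInt (w m s) 0 (PI / 2) = sum_f_R0 (fun j => Kc m s j * W j (m - j)) m.
Proof.
  unfold w. rewrite (RInt_sum (fun j t => Kc m s j * (sin t ^ (2 * j) * cos t ^ (2 * (m - j))))).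
  - apply sum_eq. intros j _. unfold W.
    rewrite (RInt_scal (V:=R_CompleteNormedModule) (fun t => sin t ^ (2 * j) * cos t ^ (2 * (m - j)))).
    + reflexivity.
    + apply exR_sc.
  - intros j x. auto_derive. auto.
Qed.

Lemma term_val m k s : (k <= m)%nat -> 0 < s ->
  Kc m s k * Wc k (m - k) =
  PI / 2 * / 2 ^ (2 * m) * (Binomial.C (2 * m - 2 * k) (m - k) * Binomial.C (m + k) m)
   * s ^ k / (s ^ m * sqrt s).
Proof.
  intros Hk Hs. unfold Kc, Wc. rewrite binom_C by lia. unfold Binomial.C.
  replace (m + k - 2 * k)%nat with (m - k)%nat by lia.
  replace (2 * m - 2 * k - (m - k))%nat with (m - k)%nat by lia.
  replace (m + k - m)%nat with k by lia.
  replace (k + (m - k))%nat with m by lia.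
  replace (2 * (m - k))%nat with (2 * m - 2 * k)%nat by lia.
  rewrite pow_mult. replace (2 ^ 2) with 4 by ring.
  assert (0 < sqrt s) by (apply sqrt_lt_R0; lra).
  pose proof (INR_fact_neq_0 k). pose proof (INR_fact_neq_0 (m - k)).
  pose proof (INR_fact_neq_0 m). pose proof (INR_fact_neq_0 (2 * k)).
  pose proof (INR_fact_neq_0 (m + k)).
  field. repeat split; try lra; apply pow_nonzero; lra.
Qed.

Lemma value m a : a > -1 ->
  RInt (w m (2 * (a + 1))) 0 (PI / 2) =
  PI / 2 * P_poly m a / Rpower (2 * (a + 1)) (INR m + / 2).
Proof.
  intro Ha.
  change (@eq R (RInt (w m (2*(a+1))) 0 (PI/2)) (PI / 2 * P_poly m a / Rpower (2 * (a + 1)) (INR m + / 2))).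
  set (s := 2 * (a + 1)). assert (Hs : 0 < s) by (unfold s; lra).
  rewrite Rpower_plus, Rpower_pow, Rpower_sqrt by exact Hs.
  rewrite RInt_w. rewrite P_poly_eq.
  rewrite (sum_eq _ (fun k => PI / 2 * / 2 ^ (2 * m) * (Binomial.C (2 * m - 2 * k) (m - k) * Binomial.C (m + k) m)
   * s ^ k / (s ^ m * sqrt s))).
  2: { intros k Hk. rewrite W_closed. apply term_val; auto. }
  assert (0 < sqrt s) by (apply sqrt_lt_R0; lra).
  transitivity (sum_f_R0 (fun k => (2 ^ k * Binomial.C (2 * m - 2 * k) (m - k) * Binomial.C (m + k) m
                       * (a + 1) ^ k) * (PI / 2 * / 2 ^ (2 * m) / (s ^ m * sqrt s))) m).
  - apply sum_eq. intros k Hk. unfold s. rewrite Rpow_mult_distr. field.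
    repeat split; try apply pow_nonzero; unfold s in *; lra.
  - rewrite <- scal_sum. field. repeat split; try apply pow_nonzero; unfold s in *; lra.
Qed.

Definition ff (m : nat) (a x : R) : R := / (x ^ 4 + 2 * a * x ^ 2 + 1) ^ (m + 1).

Lemma Q_pos a x : a > -1 -> 0 < x ^ 4 + 2 * a * x ^ 2 + 1.
Proof.
  intro Ha. destruct (Req_dec x 0) as [->|Hx].
  - simpl. lra.
  - assert (0 < x ^ 2) by (apply pow2_gt_0; exact Hx).
    replace (x ^ 4 + 2 * a * x ^ 2 + 1) with ((x ^ 2 - 1) ^ 2 + 2 * (a + 1) * x ^ 2) by ring.
    assert (0 <= (x ^ 2 - 1) ^ 2) by apply pow2_ge_0. nra.
Qed.

Lemma w_atan m s y : 0 < s ->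
  w m s (atan y) = sum_f_R0 (fun j => Kc m s j * ((y ^ 2) ^ j / (1 + y ^ 2) ^ m)) m.
Proof.
  intro Hs. unfold w. apply sum_eq. intros j Hj. f_equal.
  rewrite sin_atan, cos_atan. rewrite !pow_mult.
  assert (Hp : 0 < 1 + y²) by (pose proof (Rle_0_sqr y); lra).
  assert (E1 : (y / sqrt (1 + y²)) ^ 2 = y ^ 2 / (1 + y ^ 2)).
  { unfold Rdiv. rewrite Rpow_mult_distr, pow_inv. rewrite <- Rsqr_pow2 with (x := sqrt _).
    rewrite Rsqr_sqrt by lra. rewrite Rsqr_pow2. reflexivity. }
  assert (E2 : (1 / sqrt (1 + y²)) ^ 2 = / (1 + y ^ 2)).
  { unfold Rdiv. rewrite Rpow_mult_distr, pow_inv. rewrite <- Rsqr_pow2 with (x := sqrt _).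
    rewrite Rsqr_sqrt by lra. rewrite Rsqr_pow2. ring. }
  rewrite E1, E2. unfold Rdiv. rewrite Rpow_mult_distr. rewrite !pow_inv.
  replace ((1 + y ^ 2) ^ m) with ((1 + y ^ 2) ^ j * (1 + y ^ 2) ^ (m - j)) by (rewrite <- pow_add; f_equal; lia).
  assert (0 < 1 + y ^ 2) by (unfold Rsqr in Hp; simpl; lra).
  field. split; apply pow_nonzero; lra.
Qed.

Lemma w_phi m s u : 0 < s ->
  w m s (atan (u / sqrt s)) = Od m u / (sqrt s * (s + u ^ 2) ^ m).
Proof.
  intro Hs. rewrite w_atan by exact Hs. unfold Od.
  assert (Hq : 0 < sqrt s) by (apply sqrt_lt_R0; lra).
  assert (Hy : (u / sqrt s) ^ 2 = u ^ 2 / s).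
  { unfold Rdiv. rewrite Rpow_mult_distr, pow_inv. rewrite <- Rsqr_pow2 with (x := sqrt s).
    rewrite Rsqr_sqrt by lra. reflexivity. }
  rewrite Hy.
  assert (Hu : 0 <= u ^ 2) by apply pow2_ge_0.
  rewrite (sum_eq _ (fun j => INR (binom (m + j) (2 * j)) * u ^ (2 * j) * / (sqrt s * (s + u ^ 2) ^ m))).
  - unfold Rdiv. rewrite <- scal_sum. ring.
  - intros j Hj. unfold Kc. rewrite pow_mult.
    replace (1 + u ^ 2 / s) with ((s + u ^ 2) / s) by (field; lra).
    unfold Rdiv. rewrite !Rpow_mult_distr, !pow_inv.
    field. repeat split; try apply pow_nonzero; lra.
Qed.

Lemma alg_main m a x : a > -1 -> 0 < x ->
  ff m a x + / x ^ 2 * ff m a (/ x) =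
  w m (2 * (a + 1)) (atan ((x - / x) / sqrt (2 * (a + 1)))) *
  ((1 + / x ^ 2) / sqrt (2 * (a + 1)) * / (1 + ((x - / x) / sqrt (2 * (a + 1))) ^ 2)).
Proof.
  intros Ha Hx. set (s := 2 * (a + 1)). assert (Hs : 0 < s) by (unfold s; lra).
  rewrite w_phi by exact Hs. set (u := x - / x).
  assert (Hq : 0 < sqrt s) by (apply sqrt_lt_R0; lra).
  assert (Hy : (u / sqrt s) ^ 2 = u ^ 2 / s).
  { unfold Rdiv. rewrite Rpow_mult_distr, pow_inv. rewrite <- Rsqr_pow2 with (x := sqrt s).
    rewrite Rsqr_sqrt by lra. reflexivity. }
  rewrite Hy.
  assert (Hu : 0 <= u ^ 2) by apply pow2_ge_0.
  assert (Hk := key_Od x m ltac:(lra)). fold u in Hk.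
  assert (HQ1 : x ^ 4 + 2 * a * x ^ 2 + 1 = x ^ 2 * (s + u ^ 2)).
  { unfold u, s. field. lra. }
  assert (HQ2 : (/ x) ^ 4 + 2 * a * (/ x) ^ 2 + 1 = (/ x) ^ 2 * (s + u ^ 2)).
  { unfold u, s. field. lra. }
  unfold ff. rewrite HQ1, HQ2. rewrite !Rpow_mult_distr.
  assert (HO : Od m u * (1 + / x ^ 2) = / x * (x ^ (2 * m + 1) + (/ x) ^ (2 * m + 1))).
  { rewrite <- Hk. field. lra. }
  assert (HP : 0 < s + u ^ 2) by lra.
  replace (Od m u / (sqrt s * (s + u ^ 2) ^ m) * ((1 + / x ^ 2) / sqrt s * / (1 + u ^ 2 / s)))
    with ((Od m u * (1 + / x ^ 2)) * / ((s + u ^ 2) ^ m * (s + u ^ 2))).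
  2: { assert (Hss : sqrt s * sqrt s = s) by (apply sqrt_sqrt; lra).
       set (q := sqrt s) in *. rewrite <- Hss. field. repeat split; try apply pow_nonzero; nra. }
  rewrite HO.
  rewrite !pow_inv. rewrite <- !pow_mult.
  replace (2 * m + 1)%nat with (S (2 * m)) by lia.
  replace (2 * (m + 1))%nat with (S (S (2 * m))) by lia.
  replace ((s + u ^ 2) ^ (m + 1)) with ((s + u ^ 2) ^ m * (s + u ^ 2)) by (rewrite pow_add; ring).
  rewrite <- !tech_pow_Rmult. simpl (x ^ 2).
  assert (0 < x ^ (2 * m)) by (apply pow_lt; lra).
  field. repeat split; try apply pow_nonzero; lra.
Qed.

Lemma ff_exder m a x : a > -1 -> ex_derive (ff m a) x.
Proof.
  intro Ha. unfold ff. auto_derive. apply pow_nonzero. pose proof (Q_pos a x Ha).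
  simpl in *. lra.
Qed.

Lemma ff_cont m a x : a > -1 -> continuous (ff m a) x.
Proof. intro Ha. apply cont_der, ff_exder, Ha. Qed.

Lemma F_der m a x : a > -1 -> is_derive (RInt (ff m a) 0) x (ff m a x).
Proof.
  intro Ha. apply (is_derive_RInt (V:=R_NormedModule) (ff m a) (RInt (ff m a) 0) 0 x).
  - apply filter_forall. intro y. apply (RInt_correct (V:=R_CompleteNormedModule)).
    apply exR_der. intro z. apply ff_exder, Ha.
  - apply ff_cont, Ha.
Qed.

Lemma G_der m s x : is_derive (RInt (w m s) 0) x (w m s x).
Proof.
  apply (is_derive_RInt (V:=R_NormedModule) (w m s) (RInt (w m s) 0) 0 x).
  - apply filter_forall. intro y. apply (RInt_correct (V:=R_CompleteNormedModule)).
    apply exR_der. intro z. apply w_exder.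
  - apply cont_der, w_exder.
Qed.

Lemma phi_der s x : 0 < s -> x <> 0 ->
  is_derive (fun y => atan ((y - / y) / sqrt s)) x
    ((1 + / x ^ 2) / sqrt s * / (1 + ((x - / x) / sqrt s) ^ 2)).
Proof.
  intros Hs Hx. assert (0 < sqrt s) by (apply sqrt_lt_R0; lra).
  auto_derive.
  - repeat split; auto; lra.
  - assert (Hp : 0 < 1 + ((x - / x) / sqrt s) ^ 2)
      by (pose proof (pow2_ge_0 ((x - / x) / sqrt s)); lra).
    replace (1 + (x + - / x) * / sqrt s * ((x + - / x) * / sqrt s * 1))
      with (1 + ((x - / x) / sqrt s) ^ 2) by (simpl; field; lra).
    field. repeat split; try lra.
    assert (0 < (x * sqrt s) ^ 2) by (apply pow2_gt_0; apply Rmult_integral_contrapositive; split; lra).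
    pose proof (pow2_ge_0 (x * x - 1)). lra.
Qed.

Definition phi (s x : R) : R := atan ((x - / x) / sqrt s).

Lemma D_der m a x : a > -1 -> 0 < x ->
  is_derive (fun y => RInt (ff m a) 0 y - RInt (ff m a) 0 (/ y)
                      - RInt (w m (2 * (a + 1))) 0 (phi (2 * (a + 1)) y)) x 0.
Proof.
  intros Ha Hx. set (s := 2 * (a + 1)). assert (Hs : 0 < s) by (unfold s; lra).
  assert (H1 := F_der m a x Ha).
  assert (Hinv : is_derive (fun y : R => / y) x (- / x ^ 2)).
  { auto_derive. lra. field. lra. }
  assert (H2 := is_derive_comp (RInt (ff m a) 0) (fun y => / y) x _ _ (F_der m a (/ x) Ha) Hinv).
  assert (H3 := is_derive_comp (RInt (w m s) 0) (phi s) x _ _ (G_der m s (phi s x))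
                  (phi_der s x Hs ltac:(lra))).
  assert (H := is_derive_minus _ _ x _ _ (is_derive_minus _ _ x _ _ H1 H2) H3).

  assert (E : @eq R (minus (minus (ff m a x) (scal (- / x ^ 2) (ff m a (/ x))))
     (scal ((1 + / x ^ 2) / sqrt s * / (1 + ((x - / x) / sqrt s) ^ 2)) (w m s (phi s x)))) 0).
  { rewrite !minusR, !scalR. unfold phi. unfold s. rewrite (Rmult_comm _ (w _ _ _)). rewrite <- alg_main by lra.
    change (minus (ff m a x) (- / x ^ 2 * ff m a (/ x))) with (ff m a x - (- / x ^ 2 * ff m a (/ x))). ring. }
  exact (eq_rect _ (fun l => is_derive _ x l) H 0 E).
Qed.

Lemma D_const m a b : a > -1 -> 1 <= b ->
  RInt (ff m a) 0 b = RInt (ff m a) 0 (/ b) + RInt (w m (2 * (a + 1))) 0 (phi (2 * (a + 1)) b).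
Proof.
  intros Ha Hb.
  set (D := fun y => RInt (ff m a) 0 y - RInt (ff m a) 0 (/ y)
                      - RInt (w m (2 * (a + 1))) 0 (phi (2 * (a + 1)) y)).
  assert (HD1 : D 1 = 0).
  { unfold D, phi. rewrite Rinv_1. replace ((1 - 1) / sqrt (2 * (a + 1))) with 0 by (unfold Rdiv; ring).
    rewrite atan_0. rewrite (RInt_point (V:=R_CompleteNormedModule)). change (zero : R) with 0. ring. }
  assert (HDb : D 1 = D b).
  { destruct (Req_dec b 1) as [->|Hne]; [reflexivity|].
    apply (eq_is_derive (V:=R_NormedModule)).
    - intros t Ht. apply D_der; lra.
    - lra. }
  unfold D in HDb, HD1. lra.
Qed.

Lemma cont_eps (g : R -> R) x : continuous g x ->
  forall eps, 0 < eps -> exists d, 0 < d /\ forall y, Rabs (y - x) < d -> Rabs (g y - g x) < eps.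
Proof.
  intros Hc eps He. apply continuity_pt_filterlim in Hc.
  destruct (Hc eps He) as [d [Hd H]]. exists d. split; [exact Hd|].
  intros y Hy. destruct (Req_dec y x) as [->|Hne].
  - rewrite Rminus_diag, Rabs_R0. exact He.
  - apply (H y). split. + split; [exact I| auto]. + exact Hy.
Qed.

Theorem mainTheorem1 (m : nat) (a : R) (ha : a > -1) :
  improper_integral_0_infty (fun x => / (x ^ 4 + 2 * a * x ^ 2 + 1) ^ (m + 1))
    (PI / 2 * P_poly m a / Rpower (2 * (a + 1)) (INR m + / 2))
  /\ (forall l : nat, (l <= m)%nat ->
        0 < d_coef l m /\ exists q : Q, Q2R q = d_coef l m)
  /\ ((1 <= m)%nat -> forall l : nat, (l <= m)%nat ->
        exists z : Z, 2 ^ (2 * m - 1) * d_coef l m = IZR z).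
Proof.
  split; [|split].
  2: { intros l Hl. split; [apply d_pos | apply d_Q]. }
  2: { intros Hm l Hl. apply d_Z; auto. }
  assert (exf : forall b, ex_RInt (ff m a) 0 b).
  { intro b. apply exR_der. intro x. apply ff_exder, ha. }
  exists (fun b => ex_RInt_Reals_0 _ _ _ (exf b)).
  intros eps He.
  rewrite <- (value m a ha).
  set (s := 2 * (a + 1)). assert (Hs : 0 < s) by (unfold s; lra).
  assert (HcF : continuous (RInt (ff m a) 0) 0).
  { apply (ex_derive_continuous (K:=R_AbsRing) (V:=R_NormedModule)).
    exists (ff m a 0). apply F_der, ha. }
  assert (HcG : continuous (RInt (w m s) 0) (PI / 2)).
  { apply (ex_derive_continuous (K:=R_AbsRing) (V:=R_NormedModule)).
    exists (w m s (PI / 2)). apply G_der. }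
  destruct (cont_eps _ _ HcF (eps / 2) ltac:(lra)) as [d1 [Hd1 H1]].
  destruct (cont_eps _ _ HcG (eps / 2) ltac:(lra)) as [d2 [Hd2 H2]].
  pose proof PI_RGT_0 as HPI.
  set (dl := Rmin d2 (PI / 4)).
  assert (Hdl : 0 < dl /\ dl <= d2 /\ dl <= PI / 4).
  { unfold dl. split; [apply Rmin_pos; lra|]. split; [apply Rmin_l | apply Rmin_r]. }
  set (T := tan (PI / 2 - dl)).
  exists (Rmax (Rmax 1 (sqrt s * Rabs T + 2)) (/ d1 + 1)).
  intros b Hb.
  assert (Hb1 : 1 <= b) by (pose proof (Rmax_l (Rmax 1 (sqrt s * Rabs T + 2)) (/ d1 + 1));
                            pose proof (Rmax_l 1 (sqrt s * Rabs T + 2)); lra).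
  assert (Hb2 : sqrt s * Rabs T + 2 <= b) by (pose proof (Rmax_l (Rmax 1 (sqrt s * Rabs T + 2)) (/ d1 + 1));
                            pose proof (Rmax_r 1 (sqrt s * Rabs T + 2)); lra).
  assert (Hb3 : / d1 + 1 <= b) by (pose proof (Rmax_r (Rmax 1 (sqrt s * Rabs T + 2)) (/ d1 + 1)); lra).
  rewrite <- RInt_Reals.
  change (fun x : R => / (x ^ 4 + 2 * a * x ^ 2 + 1) ^ (m + 1)) with (ff m a).
  rewrite (D_const m a b ha Hb1). fold s.
  assert (HA : Rabs (RInt (ff m a) 0 (/ b) - RInt (ff m a) 0 0) < eps / 2).
  { apply H1. rewrite Rminus_0_r. rewrite Rabs_right.
    - apply (Rmult_lt_reg_l b); [lra|]. rewrite Rinv_r by lra.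
      apply (Rmult_lt_reg_l (/ d1)); [apply Rinv_0_lt_compat; lra|].
      rewrite Rmult_1_r. replace (/ d1 * (b * d1)) with b by (field; lra). lra.
    - apply Rle_ge, Rlt_le, Rinv_0_lt_compat; lra. }
  rewrite (RInt_point (V:=R_CompleteNormedModule)) in HA. change (zero : R) with 0 in HA.
  assert (Hsq : 0 < sqrt s) by (apply sqrt_lt_R0; lra).
  assert (Hib : / b <= 1).
  { rewrite <- Rinv_1. apply Rinv_le_contravar; lra. }
  assert (HyT : T < (b - / b) / sqrt s).
  { apply Rle_lt_trans with (Rabs T); [apply Rle_abs|].
    apply (Rmult_lt_reg_r (sqrt s)); [lra|].
    unfold Rdiv. rewrite Rmult_assoc, Rinv_l, Rmult_1_r by lra.
    assert (0 <= Rabs T) by apply Rabs_pos. nra. }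
  assert (Hphi1 : PI / 2 - dl < phi s b).
  { unfold phi. rewrite <- (atan_tan (PI / 2 - dl)) by lra.
    apply atan_increasing. exact HyT. }
  assert (Hphi2 : phi s b < PI / 2).
  { unfold phi. pose proof (atan_bound ((b - / b) / sqrt s)). lra. }
  assert (HB : Rabs (RInt (w m s) 0 (phi s b) - RInt (w m s) 0 (PI / 2)) < eps / 2).
  { apply H2. rewrite Rabs_left by lra. lra. }
  replace (RInt (ff m a) 0 (/ b) + RInt (w m s) 0 (phi s b) - RInt (w m s) 0 (PI / 2))
    with ((RInt (ff m a) 0 (/ b) - 0) + (RInt (w m s) 0 (phi s b) - RInt (w m s) 0 (PI / 2))) by ring.
  eapply Rle_lt_trans; [apply Rabs_triang|]. lra.
Qed.
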